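(* Let $c,d,d_1,d_2\in\mathbb{Z}$ and $T=T(c,d,d_1,d_2)$, i.e. $T_{r,k}=c+kd_1+rd_2+rkd$ for all $r,k\ge 0$. (i) (Odd Diamond Pattern) For all integers $r,k\ge 0$ and $n\ge 1$, $$\frac{\sum_{i=0}^{2n-1}T_{r+i,k}+\sum_{i=0}^{2n-1}T_{r+2n,k+i}+\sum_{i=0}^{2n-1}T_{r+2n-i,k+2n}+\sum_{i=0}^{2n-1}T_{r,k+2n-i}}{8n}=T_{r+n,k+n};$$ that is, the average of the $8n$ entries on the boundary of the diamond with corners $T_{r,k},T_{r+2n,k},T_{r+2n,k+2n},T_{r,k+2n}$ equals its middle entry. (ii) (Even Diamond Pattern) For all integers $r,k\ge 0$ and $n\ge 1$ with $n\le\min\{r,k\}$, $$\frac{\sum_{i=0}^{2n-2}\left(T_{r-n+1+i,\,k-n+1}+T_{r+n,\,k-n+1+i}+T_{r+n-i,\,k+n}+T_{r-n+1,\,k+n-i}\right)}{8n-4}=\frac{T_{r,k}+T_{r+1,k}+T_{r+1,k+1}+T_{r,k+1}}{4};$$ that is, the average of the $8n-4$ entries on the boundary of the diamond with corners $T_{r-n+1,k-n+1},T_{r+n,k-n+1},T_{r+n,k+n},T_{r-n+1,k+n}$ equals the average of the four entries $T_{r,k},T_{r+1,k},T_{r+1,k+1},T_{r,k+1}$.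
   Context: A number triangle is an array of integers $T_{r,k}$ indexed by integers $r,k\ge 0$ ($T_{r,k}$ the $k$-th entry of the $r$-th major diagonal). For $c,d,d_1,d_2\in\mathbb{Z}$, the Generalized Rascal Triangle $T(c,d,d_1,d_2)$ is the number triangle with $T_{r,k}=c+kd_1+rd_2+rkd$. *)

(* Defs.v *)
From mathcomp Require Import all_boot all_order all_algebra.
Set Implicit Arguments. Unset Strict Implicit. Unset Printing Implicit Defensive.
Import Order.TTheory GRing.Theory Num.Theory.
Local Open Scope ring_scope.

Definition rascalT (c d d1 d2 : int) (r k : nat) : int :=
  c + (k%:Z) * d1 + (r%:Z) * d2 + (r%:Z) * (k%:Z) * d.

(* Main.v *)
Require Import Defs.
From mathcomp Require Import all_boot all_order all_algebra.
From mathcomp Require Import ring lra zify.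
Import Order.TTheory GRing.Theory Num.Theory.
Local Open Scope ring_scope.

Definition Tq (C D D1 D2 x y : rat) : rat := C + y * D1 + x * D2 + x * y * D.

Lemma T_eq (c d d1 d2 : int) (r k : nat) :
  ((rascalT c d d1 d2 r k)%:~R : rat) = Tq c%:~R d%:~R d1%:~R d2%:~R r%:R k%:R.
Proof.
by rewrite /rascalT /Tq !rmorphD !rmorphM /= !pmulrn.
Qed.

Lemma sumlin (m : nat) (A B : rat) (F : nat -> rat) :
  (forall i, (i < m)%N -> F i = A + B * i%:R) ->
  \sum_(0 <= i < m) F i = m%:R * A + B * (m%:R * (m%:R - 1) / 2).
Proof.
elim: m F => [|m IH] F HF; first by rewrite big_geq // mul0r mul0r mulr0 add0r.
rewrite big_nat_recr //= IH; last by move=> i Hi; apply: HF; apply: ltnW.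
rewrite HF // -addn1 natrD; field; by [] || lra.
Qed.

Theorem mainTheorem9 (c d d1 d2 : int) :
  let T := fun r k : nat => ((rascalT c d d1 d2 r k)%:~R : rat) in
  (forall (r k n : nat), (1 <= n)%N ->
     (\sum_(0 <= i < 2 * n) T (r + i)%N k
      + \sum_(0 <= i < 2 * n) T (r + 2 * n)%N (k + i)%N
      + \sum_(0 <= i < 2 * n) T (r + 2 * n - i)%N (k + 2 * n)%N
      + \sum_(0 <= i < 2 * n) T r (k + 2 * n - i)%N) / (8 * n)%:R
     = T (r + n)%N (k + n)%N)
  /\
  (forall (r k n : nat), (1 <= n)%N -> (n <= minn r k)%N ->
     (\sum_(0 <= i < 2 * n - 1)
        (T (r - n + 1 + i)%N (k - n + 1)%N + T (r + n)%N (k - n + 1 + i)%N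
         + T (r + n - i)%N (k + n)%N + T (r - n + 1)%N (k + n - i)%N))
       / (8 * n - 4)%:R
     = (T r k + T r.+1 k + T r.+1 k.+1 + T r k.+1) / 4).
Proof.
move=> T.
set C : rat := c%:~R; set D : rat := d%:~R; set D1 : rat := d1%:~R; set D2 : rat := d2%:~R.
have HT : forall r k, T r k = Tq C D D1 D2 r%:R k%:R by move=> r k; rewrite /T T_eq.
split.
- move=> r k n Hn.
  have Nge : (1 <= n%:R :> rat) by rewrite ler1n.
  set x : rat := r%:R; set y : rat := k%:R; set N : rat := n%:R.
  rewrite (@sumlin _ (Tq C D D1 D2 x y) (D2 + y * D)); last first.
    by move=> i _; rewrite HT natrD /Tq /x /y /N; ring.
  rewrite (@sumlin _ (Tq C D D1 D2 (x + 2 * N) y) (D1 + (x + 2 * N) * D)); last first.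
    by move=> i _; rewrite HT !natrD ?natrM /Tq /x /y /N; ring.
  rewrite (@sumlin _ (Tq C D D1 D2 (x + 2 * N) (y + 2 * N)) (- (D2 + (y + 2 * N) * D))); last first.
    move=> i Hi; rewrite HT natrB; last by apply: leq_trans (ltnW Hi) _; apply: leq_addl.
    by rewrite !natrD ?natrM /Tq /x /y /N; ring.
  rewrite (@sumlin _ (Tq C D D1 D2 x (y + 2 * N)) (- (D1 + x * D))); last first.
    move=> i Hi; rewrite HT natrB; last by apply: leq_trans (ltnW Hi) _; apply: leq_addl.
    by rewrite !natrD ?natrM /Tq /x /y /N; ring.
  rewrite HT !natrD ?natrM /Tq /x /y /N.
  field; lra.
- move=> r k n Hn Hmin.
  have Nge : (1 <= n%:R :> rat) by rewrite ler1n.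
  have Hr : (n <= r)%N by move: Hmin; rewrite leq_min => /andP[].
  have Hk : (n <= k)%N by move: Hmin; rewrite leq_min => /andP[].
  set x : rat := r%:R; set y : rat := k%:R; set N : rat := n%:R.
  have Ex : ((r - n + 1)%N%:R : rat) = x - N + 1 by rewrite natrD natrB.
  have Ey : ((k - n + 1)%N%:R : rat) = y - N + 1 by rewrite natrD natrB.
  set x' := x - N + 1; set y' := y - N + 1.
  rewrite (@sumlin _ (Tq C D D1 D2 x' y' + Tq C D D1 D2 (x + N) y'
      + Tq C D D1 D2 (x + N) (y + N) + Tq C D D1 D2 x' (y + N))
      ((D2 + y' * D) + (D1 + (x + N) * D) - (D2 + (y + N) * D) - (D1 + x' * D))); last first.
    move=> i Hi.
    have H1 : (i <= r + n)%N by move: Hi Hr; lia.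
    have H2 : (i <= k + n)%N by move: Hi Hk; lia.
    rewrite !HT (natrD _ (r - n + 1)) (natrD _ (k - n + 1)) Ex Ey.
    rewrite (natrB _ H1) (natrB _ H2).
    rewrite !natrD /Tq /x' /y' /x /y /N; ring.
  have Em : ((2 * n - 1)%N%:R : rat) = 2 * N - 1 by rewrite natrB ?natrM //; lia.
  have E8 : ((8 * n - 4)%N%:R : rat) = 8 * N - 4.
    by rewrite natrB; [rewrite natrM | lia].
  rewrite Em E8 !HT -[r.+1]addn1 -[k.+1]addn1 !natrD /Tq /x' /y' /x /y /N.
  field; lra.
Qed.
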